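(* Let $n\ge1$, let $0<x_1<x_2<\dots<x_{n+1}<1$, and let $A$ be the $(n+1)\times(n+1)$ Bernstein–Vandermonde matrix, $a_{r,c}=\binom{n}{c-1}x_r^{\,c-1}(1-x_r)^{n-c+1}$. Then all pivots $p_{i,j}$ ($1\le j\le i\le n+1$) of the Neville elimination of $A$ are nonzero (so it proceeds without row exchanges), and for $1\le j\le n$, $j+1\le i\le n+1$ the multipliers are $$m_{i,j}=\frac{p_{i,j}}{p_{i-1,j}}=\frac{(1-x_i)^{n-j+1}(1-x_{i-j})\prod_{k=1}^{j-1}(x_i-x_{i-k})}{(1-x_{i-1})^{n-j+2}\prod_{k=2}^{j}(x_{i-1}-x_{i-k})},$$ where empty products equal $1$.
   Context: Neville elimination of a nonsingular $N\times N$ matrix $M$: set $M_1=M$ and, for $t=1,\dots,N-1$, obtain $M_{t+1}=(a^{(t+1)}_{i,j})$ from $M_t=(a^{(t)}_{i,j})$ by $a^{(t+1)}_{i,j}=a^{(t)}_{i,j}$ if $i\le t$; $a^{(t+1)}_{i,j}=a^{(t)}_{i,j}-\big(a^{(t)}_{i,t}/a^{(t)}_{i-1,t}\big)a^{(t)}_{i-1,j}$ if $i\ge t+1$ and $j\ge t+1$; and $a^{(t+1)}_{i,j}=0$ otherwise. The pivot $(i,j)$ is $p_{i,j}=a^{(j)}_{i,j}$ for $1\le j\le i\le N$ (the procedure is carried out without row exchanges when all pivots $p_{i,j}$, $j\le i<N$, are nonzero), and the multiplier is $m_{i,j}=p_{i,j}/p_{i-1,j}$ for $j<i$. *)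

(* Defs.v *)
From mathcomp Require Import all_boot all_order all_algebra.
Set Implicit Arguments. Unset Strict Implicit. Unset Printing Implicit Defensive.
Import Order.TTheory GRing.Theory Num.Theory.
Local Open Scope ring_scope.

(* Matrices are represented as functions of 1-based indices (i, j);
   entries outside 1..N are irrelevant (never used by the statement). *)

(* Neville elimination: neville M t = M_t, for t >= 1 (neville M 0 = M_1 = M). *)
Fixpoint neville_step {R : fieldType} (M : nat -> nat -> R) (t : nat)
  : nat -> nat -> R :=
  match t with
  | 0%N | 1%N => M
  | t'.+1 =>
      let A := neville_step M t' in
      fun i j =>
        if (i <= t')%N then A i j
        else if (t'.+1 <= j)%N then A i j - (A i t' / A i.-1 t') * A i.-1 j
        else 0
  end.

Definition pivot {R : fieldType} (M : nat -> nat -> R) (i j : nat) : R :=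
  neville_step M j i j.

Definition multiplier {R : fieldType} (M : nat -> nat -> R) (i j : nat) : R :=
  pivot M i j / pivot M i.-1 j.

Definition bernstein_vandermonde {R : pzRingType} (n : nat) (x : nat -> R)
  : nat -> nat -> R :=
  fun r c => ('C(n, c.-1))%:R * x r ^+ c.-1 * (1 - x r) ^+ (n - c.-1).

(* Main.v *)
Require Import Defs.
From mathcomp Require Import all_boot all_order all_algebra.
From mathcomp Require Import ring zify.
Set Warnings "-notation-overridden".
Import Order.TTheory GRing.Theory Num.Theory.
Local Open Scope ring_scope.

Fixpoint DD {R : fieldType} (z f : nat -> R) (t : nat) : nat -> R :=
  match t with
  | 0%N => f
  | t'.+1 => fun i => (DD z f t' i - DD z f t' i.-1) / (z i - z (i - t)%N)
  end.

Lemma DD_S {R : fieldType} (z f : nat -> R) t i :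
  DD z f t.+1 i = (DD z f t i - DD z f t i.-1) / (z i - z (i - t.+1)%N).
Proof. by []. Qed.

Lemma eq_DD {R : fieldType} (z f g : nat -> R) t :
  (forall r, f r = g r) -> forall i, DD z f t i = DD z g t i.
Proof. move=> H; elim: t => [|t IH] i //=; by rewrite !IH. Qed.

Lemma DD_const {R : fieldType} (z : nat -> R) c t i :
  DD z (fun _ => c) t.+1 i = 0.
Proof.
elim: t i => [|t IH] i /=; first by rewrite subrr mul0r.
by rewrite /= in IH; rewrite !IH subrr mul0r.
Qed.

Lemma DD_leib {R : fieldType} (z f : nat -> R) (N : nat) :
  (forall a b, (1 <= b)%N -> (b < a)%N -> (a <= N)%N -> z a != z b) ->
  forall t i, (t.+2 <= i <= N)%N ->
  DD z (fun r => z r * f r) t.+1 i = z i * DD z f t.+1 i + DD z f t i.-1.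
Proof.
move=> zd; elim=> [|t IH] i /andP[hi hN].
  have h : z i - z (i - 1)%N != 0.
    by rewrite subr_eq0 zd //; lia.
  rewrite /= subn1 in h *.
  by field.
have e1 := IH i; have e2 := IH i.-1.
rewrite DD_S e1 ?e2; try (apply/andP; split; lia).
have hd : z i - z (i - t.+2)%N != 0 by rewrite subr_eq0 zd //; lia.
have he : z i.-1 - z (i.-1 - t.+1)%N != 0 by rewrite subr_eq0 zd //; lia.
have ix : (i.-1 - t.+1 = i - t.+2)%N by lia.
rewrite (DD_S z f t.+1 i) (DD_S z f t i.-1).
rewrite ix in he *.
set u := DD z f t.+1 i. set v := DD z f t i.-1. set w := DD z f t i.-1.-1.
by field; rewrite he hd.
Qed.

Lemma DD_pow {R : fieldType} (z : nat -> R) (N : nat) :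
  (forall a b, (1 <= b)%N -> (b < a)%N -> (a <= N)%N -> z a != z b) ->
  forall m t i, (m <= t)%N -> (t < i <= N)%N ->
  DD z (fun r => z r ^+ m) t i = (m == t)%:R.
Proof.
move=> zd; elim=> [|m IH] t i hm /andP[hi hN].
  case: t hm hi => [|t] _ hi /=; first by rewrite expr0.
  rewrite -/(DD z (fun r => z r ^+ 0) t.+1 i).
  rewrite (@eq_DD _ z _ (fun _ => 1)) => [|r]; last by rewrite expr0.
  by rewrite DD_const.
case: t hm hi => [|t] // hm hi.
rewrite (@eq_DD _ z _ (fun r => z r * z r ^+ m)) => [|r]; last by rewrite exprS.
rewrite (@DD_leib _ z _ N zd); last (apply/andP; split; lia).
rewrite IH; last (apply/andP; split; lia); last lia.
rewrite IH; last (apply/andP; split; lia); last lia.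
have -> : (m == t.+1) = false by apply/eqP; lia.
by rewrite eqSS mulr0 add0r.
Qed.

Definition yy {R : fieldType} (x : nat -> R) r := x r / (1 - x r).
Definition Pp {R : fieldType} (x : nat -> R) t i :=
  \prod_(1 <= k < t) (yy x i - yy x (i - k)%N).

Lemma NS {R : fieldType} (M : nat -> nat -> R) s i j :
  neville_step M s.+2 i j =
  if (i <= s.+1)%N then neville_step M s.+1 i j
  else if (s.+2 <= j)%N then neville_step M s.+1 i j -
     (neville_step M s.+1 i s.+1 / neville_step M s.+1 i.-1 s.+1) * neville_step M s.+1 i.-1 j
  else 0.
Proof. by []. Qed.

Lemma xmono (R : realFieldType) n (x : nat -> R) :
  (forall r, (1 <= r)%N -> (r < n.+1)%N -> x r < x r.+1) ->
  forall a b, (1 <= b)%N -> (b < a)%N -> (a <= n.+1)%N -> x b < x a.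
Proof.
move=> hinc a b hb; elim: a => // a IH hba ha.
have [lt|gt|eq] := ltngtP b a.
- apply: lt_trans (IH lt _) (hinc a _ _); lia.
- lia.
- rewrite -eq; apply: hinc; lia.
Qed.

Lemma omx_neq0 (R : realFieldType) n (x : nat -> R) :
  (forall r, (1 <= r <= n.+1)%N -> 0 < x r /\ x r < 1) ->
  forall r, (1 <= r <= n.+1)%N -> 1 - x r != 0.
Proof.
move=> h r hr; have [_ h1] := h r hr.
by rewrite subr_eq0 eq_sym lt_eqF.
Qed.

Lemma ydist (R : realFieldType) n (x : nat -> R) :
  (forall r, (1 <= r <= n.+1)%N -> 0 < x r /\ x r < 1) ->
  (forall r, (1 <= r)%N -> (r < n.+1)%N -> x r < x r.+1) ->
  forall a b, (1 <= b)%N -> (b < a)%N -> (a <= n.+1)%N -> yy x a != yy x b.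
Proof.
move=> h01 hinc a b hb hba ha.
have xab := @xmono R n x hinc a b hb hba ha.
have [_ ha1] := h01 a ltac:(apply/andP; split; lia).
have [_ hb1] := h01 b ltac:(apply/andP; split; lia).
have na := @omx_neq0 R n x h01 a ltac:(apply/andP; split; lia).
have nb := @omx_neq0 R n x h01 b ltac:(apply/andP; split; lia).
have -> : yy x a = yy x b + (x a - x b) / ((1 - x a) * (1 - x b)).
  by rewrite /yy; field; rewrite na nb.
rewrite -subr_eq0 addrC addKr; apply/lt0r_neq0.
by rewrite divr_gt0 // ?subr_gt0 // mulr_gt0 // subr_gt0.
Qed.

Lemma nev (R : realFieldType) n (x : nat -> R) :
  (forall r, (1 <= r <= n.+1)%N -> 0 < x r /\ x r < 1) ->
  (forall r, (1 <= r)%N -> (r < n.+1)%N -> x r < x r.+1) ->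
  forall s, (s < n.+1)%N -> forall i j, (s.+1 <= i <= n.+1)%N -> (s.+1 <= j)%N ->
  neville_step (bernstein_vandermonde n x) s.+1 i j =
    (1 - x i) ^+ n * ('C(n, j.-1))%:R * Pp x s.+1 i
    * DD (yy x) (fun r => yy x r ^+ j.-1) s i.
Proof.
move=> h01 hinc; elim=> [|s IH] hs i j /andP[hi hiN] hj.
  rewrite /= /bernstein_vandermonde /Pp big_geq // mulr1.
  have ni := @omx_neq0 R n x h01 i ltac:(apply/andP; split; lia).
  have [jn|jn] := leqP j.-1 n.
    have -> : (1 - x i) ^+ n = (1 - x i) ^+ (n - j.-1) * (1 - x i) ^+ j.-1.
      by rewrite -exprD subnK.
    rewrite /yy expr_div_n.
    by field; rewrite expf_neq0.
  by rewrite bin_small // !mul0r mulr0 mul0r.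
rewrite NS ifF; last lia.
rewrite ifT; last lia.
have yd := @ydist R n x h01 hinc.
rewrite !IH; try lia; try (apply/andP; split; lia).
have d1 : DD (yy x) (fun r => yy x r ^+ s) s i = 1.
  by rewrite (@DD_pow _ _ n.+1 yd) ?eqxx //; apply/andP; split; lia.
have d2 : DD (yy x) (fun r => yy x r ^+ s) s i.-1 = 1.
  by rewrite (@DD_pow _ _ n.+1 yd) ?eqxx //; apply/andP; split; lia.
rewrite d1 d2 DD_S /Pp.
rewrite [\prod_(1 <= k < s.+2) _]big_nat_recr //=.
set P1 := \prod_(1 <= k < s.+1) (yy x i - _).
set P2 := \prod_(1 <= k < s.+1) (yy x i.-1 - _).
have nP2 : P2 != 0.
  rewrite /P2 prodf_seq_neq0; apply/allP => k; rewrite mem_index_iota => hk.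
  by rewrite /= subr_eq0 yd //; lia.
have nw : (1 - x i.-1) ^+ n != 0.
  by rewrite expf_neq0 // (@omx_neq0 R n x h01) //; apply/andP; split; lia.
have nC : ('C(n, s))%:R != 0 :> R by rewrite pnatr_eq0 -lt0n bin_gt0; lia.
have nd : yy x i - yy x (i - s.+1)%N != 0 by rewrite subr_eq0 yd //; lia.
by field; rewrite nP2 nw nC nd.
Qed.

Lemma piv (R : realFieldType) n (x : nat -> R) :
  (forall r, (1 <= r <= n.+1)%N -> 0 < x r /\ x r < 1) ->
  (forall r, (1 <= r)%N -> (r < n.+1)%N -> x r < x r.+1) ->
  forall i j, (1 <= j)%N -> (j <= i)%N -> (i <= n.+1)%N ->
  pivot (bernstein_vandermonde n x) i j = (1 - x i) ^+ n * ('C(n, j.-1))%:R * Pp x j i.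
Proof.
move=> h01 hinc i [//|s] _ hsi hi.
have E := @nev R n x h01 hinc s ltac:(lia) i s.+1 ltac:(apply/andP; split; lia) ltac:(lia).
rewrite /pivot E.
have yd := @ydist R n x h01 hinc.
by rewrite (@DD_pow _ _ n.+1 yd) ?eqxx ?mulr1 //; apply/andP; split; lia.
Qed.

Lemma Pp_neq0 (R : realFieldType) n (x : nat -> R) :
  (forall r, (1 <= r <= n.+1)%N -> 0 < x r /\ x r < 1) ->
  (forall r, (1 <= r)%N -> (r < n.+1)%N -> x r < x r.+1) ->
  forall i j, (1 <= j)%N -> (j <= i)%N -> (i <= n.+1)%N -> Pp x j i != 0.
Proof.
move=> h01 hinc i j hj hji hi.
rewrite /Pp prodf_seq_neq0; apply/allP => k; rewrite mem_index_iota => hk.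
by rewrite /= subr_eq0 (@ydist R n x h01 hinc) //; lia.
Qed.

Lemma Pconv (R : realFieldType) n (x : nat -> R) :
  (forall r, (1 <= r <= n.+1)%N -> 0 < x r /\ x r < 1) ->
  forall i j, (1 <= j)%N -> (j <= i)%N -> (i <= n.+1)%N ->
  Pp x j i = (\prod_(1 <= k < j) (x i - x (i - k)%N)) /
     ((1 - x i) ^+ (j - 1) * \prod_(1 <= k < j) (1 - x (i - k)%N)).
Proof.
move=> h01 i j hj hji hi.
rewrite /Pp -prodr_const_nat -big_split -prodf_div /=.
apply: eq_big_nat => k hk.
have ni := @omx_neq0 R n x h01 i ltac:(apply/andP; split; lia).
have nk := @omx_neq0 R n x h01 (i - k)%N ltac:(apply/andP; split; lia).
by rewrite /yy; field; rewrite ni nk.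
Qed.

Theorem mainTheorem5 (R : realFieldType) (n : nat) (x : nat -> R) :
  (1 <= n)%N ->
  (forall r, (1 <= r <= n.+1)%N -> 0 < x r /\ x r < 1) ->
  (forall r, (1 <= r)%N -> (r < n.+1)%N -> x r < x r.+1) ->
  (forall i j, (1 <= j)%N -> (j <= i)%N -> (i <= n.+1)%N ->
     pivot (bernstein_vandermonde n x) i j != 0) /\
  (forall i j, (1 <= j <= n)%N -> (j.+1 <= i <= n.+1)%N ->
     multiplier (bernstein_vandermonde n x) i j =
       ((1 - x i) ^+ (n - j + 1) * (1 - x (i - j)%N)
          * \prod_(1 <= k < j) (x i - x (i - k)%N))
       / ((1 - x i.-1) ^+ (n - j + 2)
          * \prod_(2 <= k < j.+1) (x i.-1 - x (i - k)%N))).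
Proof.
move=> hn h01 hinc.
have om r : (1 <= r <= n.+1)%N -> 1 - x r != 0 := @omx_neq0 R n x h01 r.
have nC j : (j <= n.+1)%N -> ('C(n, j.-1))%:R != 0 :> R.
  by move=> hj; rewrite pnatr_eq0 -lt0n bin_gt0; lia.
split.
  move=> i j hj hji hi; rewrite (@piv R n x h01 hinc) //.
  have a1 : 1 - x i != 0 by rewrite om //; apply/andP; split; lia.
  have a2 := nC j ltac:(lia).
  have a3 := @Pp_neq0 R n x h01 hinc i j hj hji hi.
  by rewrite !mulf_neq0 ?expf_neq0.
move=> i j /andP[hj hjn] /andP[hji hi].
rewrite /multiplier !(@piv R n x h01 hinc); try lia.
rewrite !(@Pconv R n x h01); try lia.
have r1 : \prod_(1 <= k < j) (x i.-1 - x (i.-1 - k)%N) =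
          \prod_(2 <= k < j.+1) (x i.-1 - x (i - k)%N).
  rewrite (big_add1 _ _ 1) /=; apply: eq_big_nat => k hk.
  by have -> : (i - k.+1 = i.-1 - k)%N by lia.
have r2 : \prod_(1 <= k < j) (1 - x (i.-1 - k)%N) =
          \prod_(2 <= k < j.+1) (1 - x (i - k)%N).
  rewrite (big_add1 _ _ 1) /=; apply: eq_big_nat => k hk.
  by have -> : (i - k.+1 = i.-1 - k)%N by lia.
rewrite r1 r2.
set S1 := \prod_(1 <= k < j) (1 - x (i - k)%N).
set S2 := \prod_(2 <= k < j.+1) (1 - x (i - k)%N).
set Q1 := \prod_(1 <= k < j) (x i - x (i - k)%N).
set Q2 := \prod_(2 <= k < j.+1) (x i.-1 - x (i - k)%N).
have hS : S1 * (1 - x (i - j)%N) = (1 - x i.-1) * S2.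
  rewrite /S1 /S2 -big_nat_recr //= big_ltn //.
  by rewrite subn1.
have nS1 : S1 != 0.
  rewrite /S1 prodf_seq_neq0; apply/allP => k; rewrite mem_index_iota => hk.
  by rewrite /= om //; apply/andP; split; lia.
have nS2 : S2 != 0.
  rewrite /S2 prodf_seq_neq0; apply/allP => k; rewrite mem_index_iota => hk.
  by rewrite /= om //; apply/andP; split; lia.
have nQ2 : Q2 != 0.
  rewrite /Q2 prodf_seq_neq0; apply/allP => k; rewrite mem_index_iota => hk.
  rewrite /= subr_eq0 eq_sym lt_eqF //.
  apply: (@xmono R n x hinc); lia.
have na : 1 - x i != 0 by rewrite om //; apply/andP; split; lia.
have nb : 1 - x i.-1 != 0 by rewrite om //; apply/andP; split; lia.
have nc : 1 - x (i - j)%N != 0 by rewrite om //; apply/andP; split; lia.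
have hC := nC j ltac:(lia).
have -> : S2 = S1 * (1 - x (i - j)%N) / (1 - x i.-1) by rewrite hS; field.
have -> : (1 - x i) ^+ n = (1 - x i) ^+ (j - 1) * (1 - x i) ^+ (n - j + 1).
  by rewrite -exprD; congr (_ ^+ _); lia.
have -> : (1 - x i.-1) ^+ n = (1 - x i.-1) ^+ (j - 1) * (1 - x i.-1) ^+ (n - j + 1).
  by rewrite -exprD; congr (_ ^+ _); lia.
have -> : (1 - x i.-1) ^+ (n - j + 2) = (1 - x i.-1) ^+ (n - j + 1) * (1 - x i.-1).
  by rewrite -exprSr; congr (_ ^+ _); lia.
field.
by rewrite !expf_neq0 // nQ2 nS1 nc nb hC.
Qed.
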